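(* Let $T=\{t_1,\ldots,t_N\}$ be documents, each containing at most $L$ distinct words from a dictionary $\{w_1,\ldots,w_D\}$, and let $\#(w)$ denote the number of documents containing word $w$. Let $h_1,\ldots,h_k$ be hash functions such that the values $h_j(t)$, over all $j$ and all documents $t$, are independent and uniformly distributed on $[0,1]$. For a word $w$ and hash function $h$, let $g(w)=\min_{t\,:\,w\in t}h(t)$ (the MinHash of $w$ under $h$). Consider the mapper MinHashSampleMap which, for each document $t$, each word $w$ in $t$, and each $j=1,\ldots,k$, emits $((w,j)\to h_j(t))$ if and only if $h_j(t)\le\frac{c\log(Dk)}{\#(w)}$, with $c=3$. Then with probability at least $1-\frac{1}{(Dk)^2}$, for all words $w$ and all hash functions $h\in\{h_1,\ldots,h_k\}$, MinHashSampleMap emits the hash value of the document that realizes $g(w)$.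
   Context: $\log$ denotes the natural logarithm. *)

(* Defs.v *)
From HB Require Import structures.
From mathcomp Require Import all_boot all_order all_algebra.
From mathcomp Require Import all_classical all_reals all_analysis.
Set Implicit Arguments. Unset Strict Implicit. Unset Printing Implicit Defensive.
Import Order.TTheory GRing.Theory Num.Theory.
Local Open Scope classical_set_scope.
Local Open Scope ring_scope.

(** Mutual independence of a finite family of real random variables:
    the joint law is the product of the marginals on all measurable boxes
    (taking [B i = setT] covers every subfamily). *)
Definition mutually_independent_RV {d} {T : measurableType d} {R : realType}
  (P : probability T R) (I : finType) (X : I -> T -> R) : Prop :=
  forall B : I -> set R, (forall i, measurable (B i)) ->
    P (\bigcap_(i in [set: I]) (X i @^-1` B i)) =
    (\prod_(i : I) P (X i @^-1` B i))%E.

Definition uniform01_RV {d} {T : measurableType d} {R : realType}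
  (P : probability T R) (X : T -> R) : Prop :=
  forall B : set R, measurable B ->
    P (X @^-1` B) = (@lebesgue_measure R) (B `&` `[0, 1]).

Definition ndocs (N D : nat) (docs : 'I_N -> {set 'I_D}) (w : 'I_D) : nat :=
  #|[set t : 'I_N | w \in docs t]|.

Definition minhash_sample_emits (R : realType) (N D k : nat)
  (docs : 'I_N -> {set 'I_D}) (h : 'I_k -> 'I_N -> R)
  (w : 'I_D) (j : 'I_k) (t : 'I_N) : Prop :=
  w \in docs t /\
  h j t <= 3 * ln ((D * k)%:R : R) / (ndocs docs w)%:R.

Definition realizes_minhash (R : realType) (N D k : nat)
  (docs : 'I_N -> {set 'I_D}) (h : 'I_k -> 'I_N -> R)
  (w : 'I_D) (j : 'I_k) (t : 'I_N) : Prop :=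
  w \in docs t /\ forall t' : 'I_N, w \in docs t' -> h j t <= h j t'.

(* Main.v *)
Require Import Defs.
From HB Require Import structures.
From mathcomp Require Import all_boot all_order all_algebra.
From mathcomp Require Import all_classical all_reals all_analysis.
From mathcomp Require Import ring lra.
Import Order.TTheory GRing.Theory Num.Theory.
Local Open Scope classical_set_scope.
Local Open Scope ring_scope.

Lemma itv_meas (R : realType) (a : R) : 0 <= a ->
  (@lebesgue_measure R) (`]a, +oo[ `&` `[0, 1]) = (if a < 1 then 1 - a else 0)%:E.
Proof.
move=> a0.
have -> : `]a, +oo[ `&` `[0, 1] = [set` `]a, 1]] :> set R.
  apply/seteqP; split => x /=; rewrite !in_itv /= ?andbT.
    by move=> [ax /andP[_ ->]]; rewrite ax.
  move=> /andP[ax x1]; split => //; apply/andP; split => //.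
  exact: (le_trans a0 (ltW ax)).
rewrite lebesgue_measure_itv /= lte_fin.
by case: ifP.
Qed.

Lemma bigU_mem (T : Type) (I : eqType) (r : seq I) (F : I -> set T) x :
  (\big[setU/set0]_(i <- r) F i) x <-> exists i, i \in r /\ F i x.
Proof.
elim: r => [|i r IH]; first by rewrite big_nil; split => // -[i []].
rewrite big_cons; split.
  case=> [Fx|/IH [j [jr Fj]]]; first by exists i; rewrite mem_head.
  by exists j; rewrite in_cons jr orbT.
case=> j []; rewrite in_cons => /orP [/eqP -> //|jr] Fj; first by left.
by right; apply/IH; exists j.
Qed.

Lemma union_bound d (T : measurableType d) (R : realType) (P : probability T R)
  (I : Type) (r : seq I) (F : I -> set T) :
  (forall i, measurable (F i)) ->
  (P (\big[setU/set0]_(i <- r) F i) <= \sum_(i <- r) P (F i))%E.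
Proof.
move=> mF; elim: r => [|i r IH]; first by rewrite !big_nil measure0.
rewrite !big_cons; apply: le_trans (measureU2 _ _ _) _ => //.
  by apply: bigsetU_measurable.
exact: leeD.
Qed.

Lemma power_bound (R : realType) (DK n : nat) : (0 < DK)%N -> (0 < n)%N ->
  let a := 3 * ln (DK%:R : R) / n%:R in
  (if a < 1 then 1 - a else 0) ^+ n <= ((DK%:R : R) ^+ 3)^-1.
Proof.
move=> DK0 n0 /=; set a := (3 * _ / _).
have a0 : 0 <= a.
  by rewrite /a divr_ge0 // mulr_ge0 // ln_ge0 // ler1n.
have hq : 0 <= (if a < 1 then 1 - a else 0) <= expR (- a).
  case: ifP => a1; last by rewrite lexx expR_ge0.
  by rewrite subr_ge0 ltW //=; apply: expR_ge1Dx.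
case/andP: hq => q0 qe.
apply: le_trans (_ : expR (- a) ^+ n <= _).
  by rewrite lerXn2r // ?nnegrE // expR_ge0.
rewrite -expRM_natl.
have -> : n%:R * - a = - (ln (DK%:R : R) * 3%:R).
  rewrite /a; field; by rewrite pnatr_eq0 -lt0n.
rewrite expRN expRM_natr lnK // posrE ltr0n //.
Qed.

Lemma ndocsE (N D : nat) (docs : 'I_N -> {set 'I_D}) w :
  ndocs docs w = #|[pred t | w \in docs t]|.
Proof.
rewrite /ndocs; apply: eq_card => i; rewrite [LHS]inE /=.
by apply/asboolP/idP.
Qed.

Theorem theorem5 (d : measure_display) (T : measurableType d) (R : realType)
  (P : probability T R) (N D L k : nat)
  (docs : 'I_N -> {set 'I_D})
  (hL : forall t : 'I_N, (#|docs t| <= L)%N)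
  (H : 'I_k -> 'I_N -> {RV P >-> R})
  (hind : mutually_independent_RV P (fun jt : 'I_k * 'I_N => (H jt.1 jt.2 : T -> R)))
  (hunif : forall (j : 'I_k) (t : 'I_N), uniform01_RV P (H j t)) :
  (P [set x | forall (w : 'I_D) (j : 'I_k) (t : 'I_N),
        realizes_minhash docs (fun j t => H j t x) w j t ->
        minhash_sample_emits docs (fun j t => H j t x) w j t]
   >= (1 - (((D * k) ^ 2)%:R)^-1)%:E)%E.
Proof.
set a := fun w : 'I_D => 3 * ln (((D * k)%N)%:R : R) / (ndocs docs w)%:R.
set B := fun (p : 'I_D * 'I_k) (i : 'I_k * 'I_N) =>
  if (i.1 == p.2) && (p.1 \in docs i.2) then `]a p.1, +oo[%classic else setT.
set E := fun (p : 'I_D * 'I_k) =>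
  if (0 < ndocs docs p.1)%N then
    \bigcap_(i in [set: 'I_k * 'I_N]) ((H i.1 i.2 : T -> R) @^-1` B p i)
  else set0.
have mB : forall p i, measurable (B p i).
  by move=> p i; rewrite /B; case: ifP.
have mE : forall p, measurable (E p).
  move=> p; rewrite /E; case: ifP => // _.
  apply: fin_bigcap_measurable; first exact: finite_finset.
  by move=> i _; apply: measurable_funPTI.
set U := \big[setU/set0]_(p <- index_enum ('I_D * 'I_k)%type) E p.
have mU : measurable U by apply: bigsetU_measurable.
have GU : [set x | forall (w : 'I_D) (j : 'I_k) (t : 'I_N),
        realizes_minhash docs (fun j t => H j t x) w j t ->
        minhash_sample_emits docs (fun j t => H j t x) w j t] = ~` U.
  apply/seteqP; split => x /=.
    move=> G /bigU_mem [[w j] [_ Ex]].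
    rewrite /E /= in Ex; case: ifP Ex => n0 // Ex.
    have [t0 ht0] : exists t, w \in docs t.
      by move: n0; rewrite ndocsE => /card_gt0P [t]; rewrite inE /= => ht; exists t.
    have [tm htm hmin] := @arg_minP _ R 'I_N t0 [pred t | w \in docs t]
       (fun t => H j t x) ht0.
    have {}htm : w \in docs tm by [].
    have [_ hle] := G w j tm (conj htm hmin).
    have := Ex (j, tm) I; rewrite /B /= eqxx htm /= in_itv /= andbT.
    by rewrite ltNge hle.
  move=> nU w j t [ht hmin]; split => //.
  rewrite leNgt; apply/negP => hlt; apply: nU; apply/bigU_mem.
  exists (w, j); split; first by rewrite mem_index_enum.
  rewrite /E /= ifT; last first.
    by rewrite ndocsE; apply/card_gt0P; exists t; rewrite inE.
  move=> [j' t'] _ /=; rewrite /B /=; case: ifP => //.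
  case/andP => /eqP -> ht'; rewrite /= in_itv /= andbT.
  exact: lt_le_trans hlt (hmin _ ht').
have hE : forall p, (P (E p) <= (((((D * k)%N)%:R : R) ^+ 3)^-1)%:E)%E.
  move=> [w j]; rewrite /E /=.
  case: ifP => n0; last by rewrite measure0 lee_fin invr_ge0 exprn_ge0.
  set q := if a w < 1 then 1 - a w else 0.
  have a0 : 0 <= a w.
    rewrite /a divr_ge0 // mulr_ge0 // ln_ge0 // ler1n muln_gt0.
    by rewrite (leq_ltn_trans _ (ltn_ord w)) // (leq_ltn_trans _ (ltn_ord j)).
  rewrite hind; last by move=> i; apply: mB.
  rewrite (eq_bigr (fun i : 'I_k * 'I_N =>
     (if (i.1 == j) && (w \in docs i.2) then q else 1)%:E)); last first.
    move=> i _; rewrite /B /=; case: ifP => _; first by rewrite hunif // itv_meas.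
    by rewrite preimage_setT probability_setT.
  rewrite prodEFin lee_fin.
  rewrite -(pair_big xpredT xpredT (fun i t => if (i == j) && (w \in docs t) then q else 1)) /=.
  rewrite (bigD1 j) //= [X in _ * X]big1 ?mulr1; last first.
    by move=> j' hj'; rewrite big1 // => t _; rewrite (negbTE hj').
  rewrite eqxx /= -big_mkcond prodr_const.
  rewrite (_ : #|_| = ndocs docs w); last first.
    by rewrite /ndocs; apply: eq_card => i; rewrite [RHS]inE; apply/idP/asboolP.
  apply: (@power_bound R (D * k)%N _ _ n0).
  by rewrite muln_gt0 (leq_ltn_trans _ (ltn_ord w)) // (leq_ltn_trans _ (ltn_ord j)).
rewrite GU probability_setC //.
have hU : (P U <= ((((D * k)%N)%:R : R) * ((((D * k)%N)%:R : R) ^+ 3)^-1)%:E)%E.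
  apply: le_trans (@union_bound _ _ _ P _ _ _ mE) _.
  apply: le_trans (_ : (\sum_(p <- index_enum ('I_D * 'I_k)%type)
     (((((D * k)%N)%:R : R) ^+ 3)^-1)%:E <= _)%E).
    by apply: lee_sum => p _; apply: hE.
  by rewrite sumEFin lee_fin sumr_const card_prod !card_ord mulr_natl.
have -> : ((((D * k) ^ 2)%N)%:R : R)^-1 =
    (((D * k)%N)%:R : R) * ((((D * k)%N)%:R : R) ^+ 3)^-1.
  rewrite natrX; case: (D * k)%N => [|m]; first by rewrite !expr0n /= invr0 mul0r.
  field; exact: lt0r_neq0.
by rewrite EFinB leeB.
Qed.
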